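(* There is a function $C_3(t,\epsilon)$ such that the following holds for every positive integer $t$ and every $\epsilon\in(0,1)$: let $G$ be a bipartite graph with $\delta(G)\geq C_3(t,\epsilon)$ which is induced $S_{t,t}$-free. Then for every path $x_1x_2x_3x_4$ of length $3$ in $G$ we have $|S_{N(x_1)}^{N(x_4)}(\epsilon)|\leq C_3(t,\epsilon)$.
   Context: For positive integers $a,b$, the biclaw $S_{a,b}$ is the graph with vertex set $\{x,x_1,\dots,x_a,y,y_1,\dots,y_b\}$ and edges $xy$, $xy_1,\dots,xy_b$, $yx_1,\dots,yx_a$. Induced $S_{t,t}$-free means no induced subgraph isomorphic to $S_{t,t}$. $N(v)$ is the neighbourhood of $v$, $\delta(G)$ the minimum degree. For vertex sets $X,Y$ and $\epsilon\in(0,1)$, $S_X^Y(\epsilon)=\{x\in X : |N(x)\cap Y|\leq (1-\epsilon)|Y|\}$. *)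

(* Defs.v *)
From HB Require Import structures.
From mathcomp Require Import all_boot all_order all_algebra.
From mathcomp Require Export reals.
Set Implicit Arguments. Unset Strict Implicit. Unset Printing Implicit Defensive.
Import Order.TTheory GRing.Theory Num.Theory.
Local Open Scope ring_scope.

Definition simple_graph (T : finType) (e : rel T) : Prop :=
  symmetric e /\ irreflexive e.

Definition bipartite (T : finType) (e : rel T) : Prop :=
  exists c : T -> bool, forall x y, e x y -> c x != c y.

Definition nbhd (T : finType) (e : rel T) (v : T) : {set T} := [set u | e v u].

Definition min_deg_ge (R : realType) (T : finType) (e : rel T) (d : R) : Prop :=
  forall v : T, d <= (#|nbhd e v|)%:R.

(* Vertices of the biclaw S_{a,b}:
   inl None = x, inl (Some i) = x_i, inr None = y, inr (Some j) = y_j. *)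
Definition biclaw_vertex (a b : nat) : finType := (option 'I_a + option 'I_b)%type.

Definition biclaw_adj (a b : nat) (u v : biclaw_vertex a b) : bool :=
  match u, v with
  | inl None, inr _ | inr _, inl None => true
  | inr None, inl _ | inl _, inr None => true
  | _, _ => false
  end.

Definition has_induced_biclaw (T : finType) (e : rel T) (a b : nat) : Prop :=
  exists f : biclaw_vertex a b -> T,
    injective f /\ forall u v, e (f u) (f v) = biclaw_adj u v.

Definition induced_biclaw_free (T : finType) (e : rel T) (t : nat) : Prop :=
  ~ has_induced_biclaw e t t.

Definition S_set (R : realType) (T : finType) (e : rel T) (X Y : {set T}) (eps : R)
  : {set T} :=
  [set x in X | (#|nbhd e x :&: Y|)%:R <= (1 - eps) * (#|Y|)%:R].

Definition path3 (T : finType) (e : rel T) (x1 x2 x3 x4 : T) : Prop :=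
  uniq [:: x1; x2; x3; x4] /\ e x1 x2 /\ e x2 x3 /\ e x3 x4.

(* Main.v *)
Require Import Defs.
From HB Require Import structures.
From mathcomp Require Import all_boot all_order all_algebra reals zify lra.
Import Order.TTheory GRing.Theory Num.Theory.
Set Implicit Arguments. Unset Strict Implicit. Unset Printing Implicit Defensive.

Lemma mycard_sum (T : finType) (B : {set T}) (P : pred T) :
  #|[set b in B | P b]| = \sum_(b in B) (P b : nat).
Proof.
rewrite -sum1_card big_mkcond /= [RHS]big_mkcond /=.
apply: eq_bigr => b _; rewrite inE; by case: (b \in B); case: (P b).
Qed.

Lemma inj_into (T : finType) (S : {set T}) t : (0 < t)%N -> (t <= #|S|)%N ->
  exists g : 'I_t -> T, injective g /\ forall i, g i \in S.
Proof.
move=> t0 tS.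
have : (0 < #|S|)%N by apply: leq_trans tS.
rewrite card_gt0 => /set0Pn [x0 _].
exists (fun i => nth x0 (enum S) i); split.
- move=> i j /eqP; rewrite nth_uniq ?enum_uniq // -?cardE;
   try (apply: leq_trans tS; exact: ltn_ord).
  by move=> /eqP /val_inj.
- move=> i; rewrite -mem_enum; apply: mem_nth; rewrite -cardE.
  apply: leq_trans tS; exact: ltn_ord.
Qed.

Lemma bool_eq3 (a b c : bool) : a != c -> b != c -> a = b.
Proof. by case: a; case: b; case: c. Qed.

Definition KK (t k : nat) : nat := (k * t) * (2 ^ (k * t) * t) + 1.

Lemma biclaw_build (T : finType) (e : rel T) (c : T -> bool) t u v (P F : {set T}) :
  symmetric e -> irreflexive e -> (forall x y, e x y -> c x != c y) -> (0 < t)%N ->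
  e u v -> P \subset nbhd e v -> F \subset nbhd e u -> u \notin P -> v \notin F ->
  (forall a b, a \in P -> b \in F -> e a b = false) ->
  (t <= #|P|)%N -> (t <= #|F|)%N -> has_induced_biclaw e t t.
Proof.
move=> esym eirr Hc t0 euv PN FN uP vF PF tP tF.
have [gA [gAi gAP]] := @inj_into T P t t0 tP.
have [gB [gBi gBF]] := @inj_into T F t t0 tF.
have sc x y : c x = c y -> e x y = false.
  by move=> cxy; apply/negP => /Hc; rewrite cxy eqxx.
have cuv : c u != c v by apply: Hc.
have eAv i : e (gA i) v by have := subsetP PN _ (gAP i); rewrite inE esym.
have eBu j : e (gB j) u by have := subsetP FN _ (gBF j); rewrite inE esym.
have cA i : c (gA i) = c u by apply: bool_eq3 cuv; apply: Hc.
have cB j : c (gB j) = c v.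
  apply: bool_eq3 (Hc _ _ (eBu j)) _; by rewrite eq_sym.
have eAB i j : e (gA i) (gB j) = false by apply: PF.
have nAu i : gA i != u by apply: contraNneq uP => <-.
have nBv j : gB j != v by apply: contraNneq vF => <-.
have nAB i j : gA i != gB j.
  by apply/eqP => H; move: cuv; rewrite -(cA i) H cB eqxx.
pose f (p : biclaw_vertex t t) : T :=
  match p with inl None => u | inl (Some i) => gA i
             | inr None => v | inr (Some j) => gB j end.
exists f; split.
- move=> [[i|]|[j|]] [[i'|]|[j'|]] //= H;
   try (by rewrite (gAi _ _ H)); try (by rewrite (gBi _ _ H));
   try (by move: (nAu i); rewrite H eqxx); try (by move: (nAu i'); rewrite H eqxx);
   try (by move: (nBv j); rewrite H eqxx); try (by move: (nBv j'); rewrite H eqxx).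
  all: try (by move: (nAB i j'); rewrite H eqxx).
  all: try (by move: (nAB i' j); rewrite H eqxx).
  all: try (by move: (eAv i); rewrite H eirr).
  all: try (by move: (eAv i'); rewrite -H eirr).
  all: try (by move: (eBu j); rewrite H eirr).
  all: try (by move: (eBu j'); rewrite -H eirr).
  all: try (by move: euv; rewrite H eirr).
  all: try (by move: euv; rewrite -H eirr).
- move=> [[i|]|[j|]] [[i'|]|[j'|]] //=;
  rewrite ?eirr ?eAB // ?(esym (gB _) (gA _)) ?eAB // ?eAv ?eBu ?(esym u) ?(esym v) ?eAv ?eBu ?euv //;
  try (by apply: sc; rewrite ?cA ?cB).
Qed.

Lemma DL (T : finType) (e : rel T) (c : T -> bool) t k u v (A B : {set T}) :
  symmetric e -> irreflexive e -> (forall x y, e x y -> c x != c y) ->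
  ~ has_induced_biclaw e t t -> (0 < t)%N -> (0 < k)%N ->
  e u v -> B \subset nbhd e u -> v \notin B -> A \subset nbhd e v -> u \notin A ->
  (KK t k <= #|B|)%N ->
  (forall a, a \in A -> #|B| <= k * #|B :\: nbhd e a|)%N ->
  (#|A| < k * t)%N.
Proof.
move=> esym eirr Hc nb t0 k0 euv BN vB AN uA KB HA.
rewrite ltnNge; apply/negP => Am.
set m := k * t in Am *.
pose A1 : {set T} := [set x in take m (enum A)].
have A1c : #|A1| = m.
  rewrite cardsE (card_uniqP _); last by rewrite take_uniq ?enum_uniq.
  rewrite size_take -cardE; case: ltnP => // H; apply/eqP; by rewrite eqn_leq H Am.
have A1A : A1 \subset A.
  by apply/subsetP => x; rewrite inE => /mem_take; rewrite mem_enum.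
pose p (b : T) : {set T} := [set a in A1 | ~~ e b a].
pose Bh : {set T} := [set b in B | (t <= #|p b|)%N].
have sumA : t * #|B| <= \sum_(a in A1) #|B :\: nbhd e a|.
  have : m * #|B| <= k * \sum_(a in A1) #|B :\: nbhd e a|.
    rewrite big_distrr /= -A1c -sum1_card big_distrl /=.
    apply: leq_sum => a aA1; rewrite mul1n; apply: HA; exact: subsetP A1A _ aA1.
  by rewrite /m -mulnA leq_pmul2l.
have swap : \sum_(a in A1) #|B :\: nbhd e a| = \sum_(b in B) #|p b|.
  transitivity (\sum_(a in A1) \sum_(b in B) (~~ e a b : nat)).
    apply: eq_bigr => a _; rewrite -(@mycard_sum T B (fun b => ~~ e a b)); apply: eq_card => b.
    by rewrite !inE andbC.
  rewrite exchange_big /=; apply: eq_bigr => b _; rewrite /p mycard_sum.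
  by apply: eq_bigr => a _; rewrite esym.
have bnd : \sum_(b in B) #|p b| <= m * #|Bh| + #|B| * t.-1.
  rewrite /Bh mycard_sum big_distrr /= -sum_nat_const -big_split /=.
  apply: leq_sum => b _.
  case: (leqP t #|p b|) => H /=.
    rewrite muln1; apply: leq_trans (leq_addr _ _).
    rewrite -A1c; apply: subset_leq_card; apply/subsetP => a; rewrite inE; by case/andP.
  by rewrite muln0 add0n -ltnS prednK.
have BBh : #|B| <= m * #|Bh|.
  move: sumA; rewrite swap => /leq_trans /(_ bnd).
  move=> H; rewrite -(prednK t0) mulSn in H; lia.
case: (boolP [exists P : {set T}, (t <= #|[set b in Bh | p b == P]|)%N]).
  move=> /existsP [P HP].
  have [b0 ] : exists b0, b0 \in [set b in Bh | p b == P].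
    apply/set0Pn; rewrite -card_gt0; exact: leq_trans HP.
  rewrite !inE => /andP [/andP [b0B tb0] /eqP pb0].
  apply: nb; apply: (@biclaw_build T e c t u v P [set b in Bh | p b == P]) => //.
  - rewrite -pb0; apply/subsetP => a; rewrite inE => /andP [aA1 _].
    exact: subsetP AN _ (subsetP A1A _ aA1).
  - apply/subsetP => b; rewrite !inE => /andP [/andP [bB _] _].
    by have := subsetP BN _ bB; rewrite inE.
  - rewrite -pb0 inE negb_and; apply/orP; left; apply: contra uA; exact: (subsetP A1A).
  - by rewrite !inE negb_and; apply/orP; left; rewrite negb_and vB.
  - move=> a b aP; rewrite !inE => /andP [_ /eqP pbP].
    move: aP; rewrite -pbP inE esym => /andP [_]; exact: negbTE.
  - by rewrite -pb0.
move=> /existsPn Hn.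
have Bh2 : #|Bh| <= 2 ^ m * t.-1.
  rewrite -sum1_card (partition_big p (mem (powerset A1))) /=; last first.
    move=> b _; rewrite powersetE; apply/subsetP => a; rewrite inE; by case/andP.
  rewrite -A1c -card_powerset -sum_nat_const; apply: leq_sum => P _.
  rewrite (eq_bigl (mem [set b in Bh | p b == P])); last by move=> b; rewrite !inE.
  rewrite sum1_card.
  have := Hn P; rewrite -ltnNge => H.
  by rewrite -ltnS prednK.
move: KB; rewrite /KK -/m => KB.
have : #|B| <= m * (2 ^ m * t.-1) by apply: leq_trans BBh _; rewrite leq_mul2l Bh2 orbT.
move=> H1; have : m * (2 ^ m * t.-1) < m * (2 ^ m * t) + 1.
  rewrite addn1 ltnS leq_mul2l leq_mul2l leq_pred !orbT //.
move=> H2; have := leq_trans KB (leq_trans H1 (ltnW H2)); lia.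
Qed.

Lemma cover_le (T : finType) (A B C : {set T}) :
  A \subset B :|: C -> (#|A| <= #|B| + #|C|)%N.
Proof.
move=> H; apply: leq_trans (subset_leq_card H) _.
by have := cardsUI B C; lia.
Qed.

Lemma pick_out (T : finType) (A B : {set T}) :
  (#|B| < #|A|)%N -> exists x, x \in A /\ x \notin B.
Proof.
move=> H; case: (boolP (A \subset B)) => [/subset_leq_card|/subsetPn [x xA xB]].
  by move=> H'; have := leq_trans H H'; rewrite ltnn.
by exists x.
Qed.

Lemma card_split (T : finType) (A N : {set T}) : #|A| = #|A :&: N| + #|A :\: N|.
Proof. by rewrite cardsID. Qed.

Lemma card_del (T : finType) (A : {set T}) x : (#|A| <= #|A :\ x| + 1)%N.
Proof. rewrite (cardsD1 x A); case: (x \in A) => /=; lia. Qed.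

Definition NN (t k : nat) : nat :=
  KK t 2 + KK t (2 * k) + 2 * KK t (4 * k) + 8 * t + 8 * (k * t) + 16 * (k * t) + 8 * k + 20.

Lemma ar1 (t k y y' : nat) : (NN t k <= y -> y <= y' + 1 -> KK t (2*k) <= y')%N.
Proof. rewrite /NN; lia. Qed.
Lemma ar2 (t k n3 w w1 w2 b u : nat) : (NN t k <= n3 -> n3 <= w + 1 -> w = w1 + w2 ->
  2*w2 < w -> b < (2*k)*t -> u <= b + 1 -> u < w1)%N.
Proof. rewrite /NN; lia. Qed.
Lemma ar3 (t k y b d r y' : nat) : (NN t k <= y -> y <= b + d -> d <= 2 + r ->
  (2*k)*r < y' -> y' <= y -> r <= k*r -> KK t (4*k) <= b)%N.
Proof. rewrite /NN; lia. Qed.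
Lemma ar4 (t k y n bn d r y' b : nat) : (NN t k <= y -> y <= k*n -> k*n <= k*(bn+d) ->
  k*d <= k*(2+r) -> (2*k)*r < y' -> y' <= y -> b <= y -> b <= (4*k)*bn)%N.
Proof. rewrite /NN; lia. Qed.
Lemma ar5 (t k s s' sz sn a : nat) : (s <= s' + 1 -> s' = sz + sn -> 2 * sn < s' ->
  sz <= a + 1 -> a < (4*k)*t -> s <= NN t k)%N.
Proof. rewrite /NN; lia. Qed.

Lemma main_nat (T : finType) (e : rel T) (c : T -> bool) t k x1 x2 x3 x4 :
  symmetric e -> irreflexive e -> (forall x y, e x y -> c x != c y) ->
  ~ has_induced_biclaw e t t -> (0 < t)%N -> (0 < k)%N ->
  (forall v, NN t k <= #|nbhd e v|)%N -> path3 e x1 x2 x3 x4 ->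
  (#|[set x in nbhd e x1 | #|nbhd e x4| <= k * #|nbhd e x4 :\: nbhd e x|]| <= NN t k)%N.
Proof.
move=> esym eirr Hc nb t0 k0 deg [uq [e12 [e23 e34]]].
move: uq; rewrite /= !inE !negb_or => /and4P [/and3P [n12 n13 n14] /andP [n23 n24] n34 _].
have inN u w : (w \in nbhd e u) = e u w by rewrite inE.
set Y := nbhd e x4.
set S := [set x in nbhd e x1 | _].
set S' := S :\ x2.
have SS' : (#|S| <= #|S'| + 1)%N := card_del S x2.
have [small|big] := ltnP #|S'| (KK t 2).
  rewrite /NN; lia.
set bad1 := [set z in nbhd e x2 :\ x1 | #|S'| <= 2 * #|S' :\: nbhd e z|].
have b1 : (#|bad1| < 2 * t)%N.
  apply: (DL (c:=c) (u:=x1) (v:=x2) (B:=S')) => //.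
  - apply/subsetP => x; rewrite !inE => /andP [_ /andP [] //].
  - by rewrite !inE eqxx.
  - apply/subsetP => x; rewrite !inE => /andP [/andP [_ ->] _] //.
  - by rewrite !inE eqxx.
  - by move=> a; rewrite inE => /andP [_].
set W' := nbhd e x3 :\ x2.
have W'c : (#|nbhd e x3| <= #|W'| + 1)%N := card_del _ x2.
have d3 := deg x3.
have d2 := deg x2.
have d4 : (NN t k <= #|Y|)%N := deg x4.
set bad2 := [set z in nbhd e x2 :\ x3 | #|W'| <= 2 * #|W' :\: nbhd e z|].
have b2 : (#|bad2| < 2 * t)%N.
  apply: (DL (c:=c) (u:=x3) (v:=x2) (B:=W')) => //.
  - by rewrite esym.
  - apply/subsetP => x; rewrite !inE => /andP [_ ->] //.
  - by rewrite !inE eqxx.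
  - apply/subsetP => x; rewrite !inE => /andP [/andP [_ ->] _] //.
  - by rewrite !inE eqxx.
  - rewrite /NN in d3; lia.
  - by move=> a; rewrite inE => /andP [_].
have [z [zN zb]] : exists z, z \in nbhd e x2 /\ z \notin (bad1 :|: bad2) :|: [set x1; x3].
  apply: pick_out.
  have := (leq_card_setU (bad1 :|: bad2) [set x1; x3]).1.
  have := (leq_card_setU bad1 bad2).1.
  rewrite cards2 /NN in d2 *; case: (x1 != x3) => /=; lia.
move: zb; rewrite !inE !negb_or => /andP [/andP [zb1 zb2] /andP [zx1 zx3]].
have e2z : e x2 z by rewrite -inN.
move: zb1 zb2; rewrite zx1 zx3 e2z /= -!ltnNge => zS zW.
set Y' := Y :\ x3.
have Y'c : (#|Y| <= #|Y'| + 1)%N := card_del _ x3.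
set bad3 := [set w in nbhd e x3 :\ x4 | #|Y'| <= (2 * k) * #|Y' :\: nbhd e w|].
have b3 : (#|bad3| < (2 * k) * t)%N.
  apply: (DL (c:=c) (u:=x4) (v:=x3) (B:=Y')) => //.
  - by rewrite muln_gt0.
  - by rewrite esym.
  - apply/subsetP => x; rewrite !inE => /andP [_ ->] //.
  - by rewrite !inE eqxx.
  - apply/subsetP => x; rewrite !inE => /andP [/andP [_ ->] _] //.
  - by rewrite !inE eqxx.
  - exact: ar1 d4 Y'c.
  - by move=> a; rewrite inE => /andP [_].
have [w [wN wb]] : exists w, w \in W' :&: nbhd e z /\ w \notin bad3 :|: [set x4].
  apply: pick_out.
  have := (leq_card_setU bad3 [set x4]).1.
  rewrite cards1 => U.
  exact: ar2 d3 W'c (card_split W' (nbhd e z)) zW b3 U.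
move: wN wb; rewrite !inE !negb_or => /andP [/andP [wx2 e3w] ezw] /andP [wb3 wx4].
move: wb3; rewrite wx4 e3w /= -ltnNge => wY.
set B := (Y' :&: nbhd e w) :\ z.
set A := (S' :&: nbhd e z) :\ w.
set D := [set x3; z] :|: (Y' :\: nbhd e w).
have Dc : (#|D| <= 2 + #|Y' :\: nbhd e w|)%N.
  have := (leq_card_setU [set x3; z] (Y' :\: nbhd e w)).1.
  move=> H; apply: leq_trans H _; rewrite cards2 leq_add2r; by case: (x3 != z).
have YB : (#|Y| <= #|B| + #|D|)%N.
  apply: cover_le; apply/subsetP => y yY; rewrite !inE.
  case: (y =P x3) => //= /eqP yx3; case: (y =P z) => //= /eqP yz.
  by move: yY; rewrite inE => ->; case: (e w y).
have BY : (#|B| <= #|Y|)%N.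
  apply: subset_leq_card; apply/subsetP => y; by rewrite !inE => /andP [_ /andP [/andP [_ H] _]].
have Y'Y : (#|Y'| <= #|Y|)%N.
  apply: subset_leq_card; apply/subsetP => y; rewrite !inE; by case/andP.
have rk : (#|Y' :\: nbhd e w| <= k * #|Y' :\: nbhd e w|)%N by apply: leq_pmull.
have bA : (#|A| < (4 * k) * t)%N.
  apply: (DL (c:=c) (u:=w) (v:=z) (B:=B)) => //.
  - by rewrite muln_gt0.
  - by rewrite esym.
  - apply/subsetP => x; rewrite !inE => /andP [_ /andP [_ ->]] //.
  - by rewrite !inE eqxx.
  - apply/subsetP => x; rewrite !inE => /andP [_ /andP [_ ->]] //.
  - by rewrite !inE eqxx.
  - exact: ar3 d4 YB Dc wY Y'Y rk.
  - move=> a; rewrite !inE => /andP [_ /andP [/andP [_ /andP [_ aS]] _]].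
    have YN : (#|Y :\: nbhd e a| <= #|B :\: nbhd e a| + #|D|)%N.
      apply: cover_le; apply/subsetP => y; rewrite !inE => /andP [nay yY].
      case: (eqVneq y x3) => [->|yx3]; first by rewrite /= ?orbT.
      case: (eqVneq y z) => [->|yz]; first by rewrite /= ?eqxx ?orbT.
      by rewrite nay yY /=; case: (e w y).
    have H1 := leq_mul2l k (#|Y :\: nbhd e a|) (#|B :\: nbhd e a| + #|D|).
    rewrite YN orbT in H1.
    have H2 := leq_mul2l k #|D| (2 + #|Y' :\: nbhd e w|).
    rewrite Dc orbT in H2.
    exact: ar4 d4 aS H1 H2 wY Y'Y BY.
have AS : (#|S' :&: nbhd e z| <= #|A| + 1)%N := card_del _ w.
exact: ar5 SS' (card_split S' (nbhd e z)) zS AS bA.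
Qed.

Unset Implicit Arguments.
Local Open Scope ring_scope.

Theorem mainTheorem6 (R : realType) :
  exists C3 : nat -> R -> R,
    forall (t : nat) (eps : R), (0 < t)%N -> 0 < eps < 1 ->
    forall (T : finType) (e : rel T),
      simple_graph e -> bipartite e ->
      min_deg_ge e (C3 t eps) -> induced_biclaw_free e t ->
      forall x1 x2 x3 x4 : T, path3 e x1 x2 x3 x4 ->
        (#|S_set e (nbhd e x1) (nbhd e x4) eps|)%:R <= C3 t eps.
Proof.
exists (fun t eps => (NN t (Num.truncn (eps^-1)).+1)%:R).
move=> t eps t0 /andP [e0 e1] T e [esym eirr] [c Hc] deg nb x1 x2 x3 x4 p.
set k := (Num.truncn (eps^-1)).+1.
have ke : 1 <= k%:R * eps.
  have := truncnS_gt (eps^-1); rewrite -/k => H.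
  have : eps^-1 * eps < k%:R * eps by rewrite ltr_pM2r.
  rewrite mulVf ?gt_eqF // => H'; exact: ltW.
rewrite ler_nat.
apply: leq_trans (main_nat esym eirr Hc nb t0 _ _ p) => //; last first.
  by move=> v; rewrite -(ler_nat R); apply: deg.
apply: subset_leq_card; apply/subsetP => x; rewrite !inE => /andP [xN H].
rewrite xN /=.
rewrite -(ler_nat R) natrM.
have := cardsID (nbhd e x) (nbhd e x4).
rewrite setIC in H.
move: H; set a := #|_ :&: _|; set b := #|_ :\: _|; set y := #|nbhd e x4| => H Hy.
rewrite -Hy natrD in H *.
have a0 : 0 <= a%:R :> R by [].
have b0 : 0 <= b%:R :> R by [].
have k0 : 0 <= k%:R :> R by [].
nra.
Qed.
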